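(* Let $d=2$, $n=1$, and let $\mathcal{M}=\{\mathcal{M}_0,\mathcal{M}_1\}$ be a single-qubit instrument with generalized Pauli fidelities $\tilde\nu_{s,t}$, where $\tilde\nu_{0,1}\neq0$ and $\tilde\nu_{1,0}\neq 0$. Let $r=\tilde\nu_{1,0}/\tilde\nu_{0,1}$ and define the linear map $\mathcal{B}$ on $2\times2$ matrices by $$\mathcal{B}(I)=I,\quad \mathcal{B}(X)=X,\quad \mathcal{B}(Y)=Y,\quad \mathcal{B}(Z)=rZ.$$ Define the transformed instrument $\mathcal{M}'_k=\mathcal{B}\circ\mathcal{M}_k\circ\mathcal{B}^{-1}$ and the transformed initial state $\rho'=\mathcal{B}(\rho)$. Then: 1. $\tilde\nu_{0,1}(\mathcal{M}')=\tilde\nu_{1,0}(\mathcal{M})$ and $\tilde\nu_{1,0}(\mathcal{M}')=\tilde\nu_{0,1}(\mathcal{M})$. 2. For every $m\ge1$ and every $\vec k\in\{0,1\}^m$, $$\operatorname{tr}\big(\hat{\mathcal{M}}'_{k_m}\circ\cdots\circ\hat{\mathcal{M}}'_{k_1}(\rho')\big)=\operatorname{tr}\big(\hat{\mathcal{M}}_{k_m}\circ\cdots\circ\hat{\mathcal{M}}_{k_1}(\rho)\big),$$ where hats denote randomly compiled instruments. That is, the outcome distribution of the instrument benchmarking routine under ideal gates is unchanged. Consequently, no choice of $\vec c$ in the estimators $\kappa(\vec c)=\operatorname{tr}(Z^{-c_1}\rho)\prod_j\tilde\nu_{c_j,c_{j+1}}$ can distinguish $\tilde\nu_{0,1}$ from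 $\tilde\nu_{1,0}$.
   Context: Here $X,Y,Z$ are the Pauli matrices and $I$ is the $2\times2$ identity. Let $\chi_z(j)=(-1)^{zj}$ for $z,j\in\{0,1\}$. A single-qubit instrument $\{\mathcal{M}_0,\mathcal{M}_1\}$ is a pair of completely positive trace-non-increasing maps whose sum is trace preserving. Its generalized Pauli fidelities are $$\tilde\nu_{s,t}(\mathcal{M})=\tfrac12\sum_{k\in\{0,1\}}\chi_k(s-t)\operatorname{tr}\big(Z^t\mathcal{M}_k(Z^s)\big),\qquad s,t\in\{0,1\},$$ and the definition is applied verbatim to any family of linear maps. The randomly compiled version of an instrument is $$\hat{\mathcal{M}}_k=\tfrac18\sum_{a,b,x\in\{0,1\}}\mathcal{X}^x\mathcal{Z}^a\mathcal{M}_{k+x}\mathcal{Z}^b\mathcal{X}^x,$$ where $\mathcal{X}(\rho)=X\rho X$, $\mathcal{Z}(\rho)=Z\rho Z$, and indices are taken mod 2. Under ideal gates, $\operatorname{tr}(\hat{\mathcal{M}}_{k_m}\circ\cdots\circ\hat{\mathcal{M}}_{k_1}(\rho))$ is the probability that the instrument benchmarking routine returns $\vec k$. *)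

(* Defs.v *)
From HB Require Import structures.
From mathcomp Require Import all_boot all_order all_algebra all_field.
Set Implicit Arguments. Unset Strict Implicit. Unset Printing Implicit Defensive.
Import Order.TTheory GRing.Theory Num.Theory.
Local Open Scope ring_scope.

Notation Mat := 'M[algC]_2.

Definition PX : Mat := \matrix_(i, j) (if i != j then 1 else 0).
Definition PY : Mat := \matrix_(i, j)
  (if (i == 0) && (j == 1) then - 'i else if (i == 1) && (j == 0) then 'i else 0).
Definition PZ : Mat := \matrix_(i, j)
  (if i == j then (if i == 0 then 1 else -1) else 0).

Definition Zpow (t : bool) : Mat := if t then PZ else 1%:M.

(* chi_z(j) = (-1)^(z j); for z in {0,1}, (-1)^(k(s-t)) = -1 iff k = 1 and s <> t *)
Definition chi (k : bool) (s t : bool) : algC := if k && (s != t) then -1 else 1.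

Definition linmap (f : Mat -> Mat) : Prop :=
  forall (a : algC) (A B : Mat), f (a *: A + B) = a *: f A + f B.

Definition psd (A : Mat) : Prop :=
  forall v : 'I_2 -> algC, 0 <= \sum_(i < 2) \sum_(j < 2) (v i)^* * A i j * v j.

Definition density (rho : Mat) : Prop := psd rho /\ \tr rho = 1.

(* complete positivity: the Choi matrix sum_{ij} E_ij (x) f(E_ij) is PSD,
   written out as a quadratic form on C^2 (x) C^2 *)
Definition completely_positive (f : Mat -> Mat) : Prop :=
  forall v : 'I_2 -> 'I_2 -> algC,
    0 <= \sum_(i1 < 2) \sum_(i2 < 2) \sum_(j1 < 2) \sum_(j2 < 2)
           (v i1 i2)^* * f (delta_mx i1 j1) i2 j2 * v j1 j2.

Definition trace_nonincreasing (f : Mat -> Mat) : Prop :=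
  forall A : Mat, psd A -> \tr (f A) <= \tr A.

(* single-qubit instrument {M_0, M_1} (indexed by bool: false = 0, true = 1) *)
Definition instrument (M : bool -> Mat -> Mat) : Prop :=
  (forall k, linmap (M k) /\ completely_positive (M k) /\ trace_nonincreasing (M k))
  /\ (forall A : Mat, \tr (M false A + M true A) = \tr A).

Definition gnu (M : bool -> Mat -> Mat) (s t : bool) : algC :=
  2^-1 * \sum_(k : bool) chi k s t * \tr (Zpow t *m M k (Zpow s)).

Definition chX (x : bool) (A : Mat) : Mat := if x then PX *m A *m PX else A.
Definition chZ (a : bool) (A : Mat) : Mat := if a then PZ *m A *m PZ else A.

(* randomly compiled instrument; index k + x mod 2 is addb k x *)
Definition rc (M : bool -> Mat -> Mat) (k : bool) (A : Mat) : Mat :=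
  8^-1 *: \sum_(a : bool) \sum_(b : bool) \sum_(x : bool)
     chX x (chZ a (M (addb k x) (chZ b (chX x A)))).

(* hat M_{k_m} o ... o hat M_{k_1} (rho): k_1 is applied first *)
Definition run (M : bool -> Mat -> Mat) (rho : Mat) (ks : seq bool) : Mat :=
  foldl (fun A k => rc M k A) rho ks.

(* Main.v *)
Require Import Defs.
From HB Require Import structures.
From mathcomp Require Import all_boot all_order all_algebra all_field.
From mathcomp Require Import ring.
Import Order.TTheory GRing.Theory Num.Theory.
Local Open Scope ring_scope.

Lemma o2 (i : 'I_2) : i = 0 \/ i = 1.
Proof. case: i => [[|[|n]] p]; [left|right|]; try by apply/val_inj. by []. Qed.
Lemma l1 : lift ord0 (ord0 : 'I_1) = 1 :> 'I_2. Proof. by apply/val_inj. Qed.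

Lemma trE (A : Mat) : \tr A = A 0 0 + A 1 1.
Proof. by rewrite /mxtrace !big_ord_recl big_ord0 l1 addr0. Qed.

Lemma mulE (A C : Mat) i j : (A *m C) i j = A i 0 * C 0 j + A i 1 * C 1 j.
Proof. by rewrite !mxE !big_ord_recl big_ord0 l1 addr0. Qed.

Ltac ent := apply/matrixP; let i := fresh "i" in let j := fresh "j" in move=> i j;
  case: (o2 i) => ->; case: (o2 j) => ->;
  rewrite !(mulE, mxE) /=.

Lemma trZ (A : Mat) : \tr (PZ *m A) = A 0 0 - A 1 1.
Proof. rewrite trE !mulE !mxE /=. ring. Qed.

Definition Ls (s : algC) (A : Mat) : Mat := A + ((s-1) * (\tr (PZ *m A) / 2)) *: PZ.

Lemma decomp (A : Mat) : A = ((A 0 0 + A 1 1)/2) *: 1%:M + ((A 0 1 + A 1 0)/2) *: PX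
  + ('i * (A 0 1 - A 1 0)/2) *: PY + ((A 0 0 - A 1 1)/2) *: PZ.
Proof.
have h2 : (2:algC) != 0 by rewrite pnatr_eq0.
have e1 : forall x : algC, 'i * x / 2 * 'i = - (x/2).
  by move=> x; rewrite -mulN1r -sqrCi mulrC !mulrA expr2.
have e2 : forall x : algC, 'i * x / 2 * - 'i = x/2.
  by move=> x; rewrite mulrN e1 opprK.
ent; rewrite ?e1 ?e2; field => //.
Qed.

Lemma e1 (x : algC) : 'i * x / 2 * 'i = - (x/2).
Proof. by rewrite -mulN1r -sqrCi mulrC !mulrA expr2. Qed.
Lemma e2 (x : algC) : 'i * x / 2 * - 'i = x/2.
Proof. by rewrite mulrN e1 opprK. Qed.

Lemma h2 : (2:algC) != 0. Proof. by rewrite pnatr_eq0. Qed.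

Section Lin.
Variable B : Mat -> Mat.
Hypothesis hB : linmap B.
Lemma lin0 : B 0 = 0.
Proof. have h := hB 1 0 0; rewrite !addr0 !scale1r in h.
by apply: (addrI (B 0)); rewrite addr0 -h. Qed.
Lemma linZ a A : B (a *: A) = a *: B A.
Proof. by have := hB a A 0; rewrite !addr0 lin0 addr0. Qed.
Lemma linD A C : B (A + C) = B A + B C.
Proof. by have := hB 1 A C; rewrite !scale1r. Qed.
End Lin.

Lemma Bform B s : linmap B -> B 1%:M = 1%:M -> B PX = PX -> B PY = PY -> B PZ = s*:PZ ->
  forall A, B A = Ls s A.
Proof.
move=> hB h1 hX hY hZ A.
rewrite {1}(decomp A) !(linD _ hB) !(linZ _ hB) h1 hX hY hZ /Ls trZ.
have := h2 => h2'.
ent; rewrite ?e1 ?e2; field => //.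
Qed.

Lemma Ls_comp t s A : Ls t (Ls s A) = Ls (t*s) A.
Proof. have := h2 => h2'. rewrite /Ls !trZ. ent; field => //. Qed.
Lemma Ls1 A : Ls 1 A = A.
Proof. by rewrite /Ls subrr mul0r scale0r addr0. Qed.
Lemma LsD s A C : Ls s (A + C) = Ls s A + Ls s C.
Proof. have := h2 => h2'. rewrite /Ls !trZ. ent; field => //. Qed.
Lemma Ls0 s : Ls s 0 = 0.
Proof. by rewrite /Ls trZ !mxE subrr mul0r mulr0 scale0r addr0. Qed.
Lemma LsZ s c A : Ls s (c *: A) = c *: Ls s A.
Proof. have := h2 => h2'. rewrite /Ls !trZ. ent; field => //. Qed.
Lemma LsS s (I : finType) (F : I -> Mat) : Ls s (\sum_i F i) = \sum_i Ls s (F i).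
Proof. exact: (big_morph _ (LsD s) (Ls0 s)). Qed.
Lemma chXL x s A : chX x (Ls s A) = Ls s (chX x A).
Proof. have := h2 => h2'. case: x; rewrite /chX // /Ls !trZ. ent; field => //. Qed.
Lemma chZL x s A : chZ x (Ls s A) = Ls s (chZ x A).
Proof. have := h2 => h2'. case: x; rewrite /chZ // /Ls !trZ. ent; field => //. Qed.
Lemma trLs s A : \tr (Ls s A) = \tr A.
Proof. rewrite /Ls trZ !trE !mxE /=. ring. Qed.
Lemma trZLs s A : \tr (PZ *m Ls s A) = s * \tr (PZ *m A).
Proof. have := h2 => h2'. rewrite /Ls !trZ !mxE /=. by field. Qed.
Lemma Ls1M s : Ls s 1%:M = 1%:M.
Proof. rewrite /Ls trZ !mxE /= subrr mul0r mulr0 scale0r addr0 //. Qed.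
Lemma LsPZ s : Ls s PZ = s *: PZ.
Proof. have := h2 => h2'. rewrite /Ls trZ. ent; field => //. Qed.

Lemma rcL (M M2 : bool -> Mat -> Mat) s :
  (forall k A, M2 k A = Ls s (M k (Ls s^-1 A))) ->
  forall k A, rc M2 k A = Ls s (rc M k (Ls s^-1 A)).
Proof.
move=> hM k A; rewrite /rc LsZ; congr (_ *: _).
rewrite LsS; apply: eq_bigr => a _; rewrite LsS; apply: eq_bigr => b _.
rewrite LsS; apply: eq_bigr => x _.
by rewrite hM !chZL !chXL !chZL.
Qed.

Lemma runL (M M2 : bool -> Mat -> Mat) s : s != 0 ->
  (forall k A, M2 k A = Ls s (M k (Ls s^-1 A))) ->
  forall ks rho, run M2 (Ls s rho) ks = Ls s (run M rho ks).
Proof.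
move=> s0 hM; elim=> [|k ks IH] rho //=.
by rewrite (rcL _ _ _ hM) Ls_comp mulVf // Ls1 IH.
Qed.

Theorem mainTheorem6
  (M : bool -> 'M[algC]_2 -> 'M[algC]_2) (rho : 'M[algC]_2)
  (B Binv : 'M[algC]_2 -> 'M[algC]_2) :
  instrument M -> density rho ->
  gnu M false true != 0 -> gnu M true false != 0 ->
  let r := gnu M true false / gnu M false true in
  linmap B -> B 1%:M = 1%:M -> B PX = PX -> B PY = PY -> B PZ = r *: PZ ->
  cancel B Binv -> cancel Binv B ->
  let M' := fun k A => B (M k (Binv A)) in
  [/\ gnu M' false true = gnu M true false,
      gnu M' true false = gnu M false true &
      forall (m : nat) (ks : m.-tuple bool), (1 <= m)%N ->
        \tr (run M' (B rho) ks) = \tr (run M rho ks)].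
Proof.
move=> [hlin _] _ g01 g10 r hB h1 hX hY hZ BK BinvK M'.
have r0 : r != 0 by rewrite /r mulf_neq0 // invr_eq0.
have hBf := Bform _ _ hB h1 hX hY hZ.
have hBi : forall A, Binv A = Ls r^-1 A.
  move=> A; rewrite -{1}[A](Ls1) -(mulfV r0) -Ls_comp -hBf.
  by rewrite BK.
have hM : forall k A, M' k A = Ls r (M k (Ls r^-1 A)).
  by move=> k A; rewrite /M' hBf hBi.
split.
- transitivity (r * gnu M false true); last by rewrite /r divfK.
  rewrite /gnu mulrCA !mulr_sumr; apply: eq_bigr => k _.
  rewrite hM /= Ls1M trZLs. ring.
- transitivity (r^-1 * gnu M true false); last by rewrite /r invf_div divfK.
  rewrite /gnu mulrCA !mulr_sumr; apply: eq_bigr => k _.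
  have [hl _] := hlin k.
  rewrite hM /= !mul1mx trLs LsPZ (linZ _ hl) mxtraceZ. ring.
- move=> m ks _.
  by rewrite hBf (runL _ _ _ r0 hM) trLs.
Qed.
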